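(* Let $G=(V,E)$ be a finite connected undirected graph, let $k$ be a positive integer, and fix a DFS order on $V$. Consider the lexicographic order $\preceq$ on $\mathcal{C}(G;k)$ induced by this vertex order. Let $X\in\mathcal{C}(G;k)$ be an element that is not the $\preceq$-smallest element of $\mathcal{C}(G;k)$. Then there exists $X'\in\mathcal{N}(X)$ with $X'\prec X$.
   Context: $\mathcal{C}(G;k)$ denotes the family of all vertex sets $X\subseteq V$ with $|X|=k$ such that the induced subgraph $G[X]$ is connected. For $X\in\mathcal{C}(G;k)$, the neighborhood of $X$ is $\mathcal{N}(X)=\{X'\in\mathcal{C}(G;k): |X\cap X'|=k-1\}$. A DFS order on $V$ is the linear order of the vertices by their discovery time in a depth-first search of $G$, started from some vertex, and vertices are compared using $<$ with respect to this order. For distinct $k$-sets $A,B\subseteq V$, write $A\prec B$ if the smallest vertex of the symmetric difference $A\triangle B$ lies in $A$. Equivalently, the increasing sequence of elements of $A$ is lexicographically smaller than that of $B$. Write $A\preceq B$ if $A\prec B$ or $A=B$. *)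

(* Defs.v *)
From mathcomp Require Import all_boot.
Set Implicit Arguments. Unset Strict Implicit. Unset Printing Implicit Defensive.

Definition simple_graph (T : finType) (e : rel T) : Prop :=
  symmetric e /\ irreflexive e.

Definition graph_connected (T : finType) (e : rel T) : Prop :=
  forall x y : T, connect e x y.

(* Operational depth-first search started at r.
   dfs_state e r vis st : after some steps, vis is the list of discovered
   vertices in discovery order and st is the current stack (top first). *)
Inductive dfs_state (T : finType) (e : rel T) (r : T) : seq T -> seq T -> Prop :=
  | dfs_start : dfs_state e r [:: r] [:: r]
  | dfs_push vis x st y :
      dfs_state e r vis (x :: st) -> e x y -> y \notin vis ->
      dfs_state e r (rcons vis y) (y :: x :: st)
  | dfs_pop vis x st :
      dfs_state e r vis (x :: st) -> (forall y, e x y -> y \in vis) ->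
      dfs_state e r vis st.

Definition is_dfs_order (T : finType) (e : rel T) (ord : seq T) : Prop :=
  exists r : T, dfs_state e r ord [::].

Definition vle (T : finType) (ord : seq T) (x y : T) : bool := index x ord <= index y ord.

Definition induced_connected (T : finType) (e : rel T) (X : {set T}) : bool :=
  [forall x in X, forall y in X, connect [rel a b | [&& e a b, a \in X & b \in X]] x y].

Definition conn_ksets (T : finType) (e : rel T) (k : nat) (X : {set T}) : bool :=
  (#|X| == k) && induced_connected e X.

Definition in_nbhd (T : finType) (e : rel T) (k : nat) (X X' : {set T}) : bool :=
  conn_ksets e k X' && (#|X :&: X'| == k.-1).

Definition lex_lt (T : finType) (ord : seq T) (A B : {set T}) : bool :=
  (A != B) &&
  [exists x in A :\: B, forall y in (A :\: B) :|: (B :\: A), vle ord x y].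

(* Main.v *)
Require Import Defs.
From mathcomp Require Import all_boot.

Lemma index_rcons_mem (T : eqType) (s : seq T) (y v : T) :
  v \in s -> index v (rcons s y) = index v s.
Proof. by move=> vs; rewrite -cats1 index_cat vs. Qed.

Lemma dfs_inv (T : finType) (e : rel T) (r : T) vis st :
  dfs_state e r vis st ->
  [/\ r \in vis, {subset st <= vis},
      (forall v, v \in vis -> 0 < index v vis ->
         exists2 u, e u v & index u vis < index v vis) &
      (forall v, v \in vis -> v \notin st -> forall w, e v w -> w \in vis)].
Proof.
elim=> {vis st}.
- split; first by rewrite mem_seq1.
  + by [].
  + by move=> v; rewrite mem_seq1 => /eqP -> /=; rewrite eqxx.
  + by move=> v ->.
- move=> vis x st y _ [rv stv par clo] exy yv; split.
  + by rewrite mem_rcons inE rv orbT.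
  + move=> v; rewrite inE => /orP[/eqP->|vs]; first by rewrite mem_rcons inE eqxx.
    by rewrite mem_rcons inE stv ?orbT.
  + move=> v; rewrite mem_rcons inE => /orP[/eqP->|vv] pos.
      have xv : x \in vis by apply: stv; rewrite inE eqxx.
      exists x => //; rewrite index_rcons_mem // -cats1 index_cat (negbTE yv) /=.
      by rewrite eqxx addn0 index_mem.
    rewrite index_rcons_mem // in pos *.
    have [u euv ui] := par v vv pos.
    have uv : u \in vis by rewrite -index_mem (ltn_trans ui) // index_mem.
    by exists u => //; rewrite index_rcons_mem.
  + move=> v; rewrite mem_rcons inE => /orP[/eqP->|vv]; first by rewrite inE eqxx.
    rewrite inE negb_or => /andP[_ nst] w evw; rewrite mem_rcons inE.
    by rewrite (clo v vv nst w evw) orbT.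
- move=> vis x st _ [rv stv par clo] hx; split=> //.
  + by move=> v vs; apply: stv; rewrite inE vs orbT.
  + move=> v vv nst w evw; have [vxe|vx] := eqVneq v x; first by rewrite vxe in evw; exact: hx.
    by apply: (clo v vv) => //; rewrite inE negb_or vx.
Qed.

Lemma dfs_facts (T : finType) (e : rel T) (ord : seq T) :
  graph_connected e -> is_dfs_order e ord ->
  (forall v, v \in ord) /\
  (forall v, 0 < index v ord -> exists2 u, e u v & index u ord < index v ord).
Proof.
move=> conn [r H]; have [rv _ par clo] := (@dfs_inv _ _ _ _ _ H).
have allin : forall v, v \in ord.
  move=> v; have /connectP[p pp ->] := conn r v.
  move: r rv pp {H}; elim: p => //= a p IH x xv /andP[exa pp].
  by apply: IH pp; apply: (clo x xv _ a exa).
split=> // v; exact: par.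
Qed.

Section G.
Variables (T : finType) (e : rel T).
Hypothesis esym : symmetric e.

Definition erel (A : {set T}) : rel T := [rel a b | [&& e a b, a \in A & b \in A]].
Definition iconn (A : {set T}) := forall x y, x \in A -> y \in A -> connect (erel A) x y.

Lemma erel_sym A : symmetric (erel A).
Proof. move=> x y; rewrite /erel /= esym; by case: (e y x); case: (x \in A); case: (y \in A). Qed.

Lemma iconnE A : iconn A <-> induced_connected e A.
Proof.
split.
  by move=> H; apply/forallP=> x; apply/implyP=> xA; apply/forallP=> y; apply/implyP=> yA; exact: H.
by move=> /forallP H x y xA yA; move: (H x); rewrite xA /= => /forallP/(_ y); rewrite yA.
Qed.

Lemma erel_mono (A B : {set T}) : A \subset B -> subrel (connect (erel A)) (connect (erel B)).
Proof.
move=> /subsetP AB; apply: connect_sub => x y /= /and3P[exy xA yA].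
by apply: connect1; rewrite /erel /= exy !AB.
Qed.

Lemma add_conn (A : {set T}) t w : iconn A -> t \in A -> e t w -> iconn (w |: A).
Proof.
move=> cA tA etw.
have sub : A \subset w |: A by apply/subsetP=> z zA; rewrite in_setU1 zA orbT.
have toT : forall x, x \in w |: A -> connect (erel (w |: A)) x t.
  move=> x; rewrite in_setU1 => /orP[/eqP->|xA].
    by apply: connect1; rewrite /erel /= esym etw !in_setU1 eqxx tA orbT.
  exact: (@erel_mono A (w |: A) sub x t (cA x t xA tA)).
move=> x y xW yW; apply: connect_trans (toT x xW) _.
by rewrite (sym_connect_sym (@erel_sym _)); apply: toT.
Qed.

Lemma crossing (W A : {set T}) t0 w0 : t0 \in A -> w0 \notin A -> connect (erel W) t0 w0 ->
  exists t, exists2 w, (t \in A) && (w \notin A) & (w \in W) && e t w.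
Proof.
move=> tA wA /connectP[p pp wl]; subst w0.
elim: p t0 tA pp wA => /= [|a p IH] t tA; first by move=> _ /negP.
move=> /andP[/and3P[eta tW aW] pp] wA.
case aA: (a \in A); first exact: IH aA pp wA.
by exists t, a; rewrite ?tA ?aA ?aW.
Qed.

Lemma grow (W : {set T}) n : iconn W -> forall T0, iconn T0 -> T0 \subset W -> T0 != set0 ->
  #|W :\: T0| = n.+1 -> exists2 z, z \in W :\: T0 & iconn (W :\ z).
Proof.
move=> cW; elim: n => [|n IH] T0 c0 sub0 ne0 card0.
  have /cards1P[z Ez] : #|W :\: T0| == 1 by rewrite card0.
  have zin : z \in W :\: T0 by rewrite Ez set11.
  exists z => //.
  have -> : W :\ z = T0.
    apply/setP=> v; rewrite !inE.
    case vT: (v \in T0).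
      rewrite (subsetP sub0 v vT) andbT; apply/negP=> /eqP vz; subst v.
      by move: zin; rewrite inE vT.
    case vz: (v == z) => //=; apply/negP=> vW.
    have : v \in W :\: T0 by rewrite inE vT vW.
    by rewrite Ez inE vz.
  exact: c0.
have [t0 t0T] : exists t0, t0 \in T0.
  by case/set0Pn: ne0 => x xT; exists x.
have [w0 w0in] : exists w0, w0 \in W :\: T0.
  by apply/set0Pn; rewrite -card_gt0 card0.
move: (w0in); rewrite inE => /andP[w0T w0W].
have [t [w /andP[tT wT] /andP[wW etw]]] :=
  @crossing W T0 t0 w0 t0T w0T (cW t0 w0 (subsetP sub0 t0 t0T) w0W).
have [z zin cz] : exists2 z, z \in W :\: (w |: T0) & iconn (W :\ z).
  apply: IH.
  - exact: (@add_conn T0 t w c0 tT etw).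
  - by apply/subsetP=> v; rewrite in_setU1 => /orP[/eqP->//|/(subsetP sub0)].
  - by apply/set0Pn; exists w; rewrite in_setU1 eqxx.
  - have -> : W :\: (w |: T0) = (W :\: T0) :\ w.
      by apply/setP=> v; rewrite !inE negb_or andbA andbC andbA.
    have wi : w \in W :\: T0 by rewrite inE wT wW.
    by move: card0; rewrite (cardsD1 w) wi add1n => -[].
exists z => //; move: zin; rewrite !inE negb_or => /andP[/andP[_ ->] ->] //.
Qed.
End G.

Lemma finish (T : finType) (e : rel T) (ord : seq T) (k : nat) (X : {set T}) y z :
  symmetric e -> #|X| = k -> y \notin X -> z \in X -> index y ord < index z ord ->
  iconn T e ((y |: X) :\ z) ->
  exists X' : {set T}, in_nbhd e k X X' && lex_lt ord X' X.
Proof.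
move=> esym cX yX zX yz cW.
have zy : z != y by apply: contraNneq yX => <-.
exists ((y |: X) :\ z); apply/andP; split.
  apply/andP; split; first (apply/andP; split).
  - have zW : z \in y |: X by rewrite in_setU1 zX orbT.
    by move: (cardsD1 z (y |: X)); rewrite zW cardsU1 yX cX => /eqP; rewrite eqn_add2l eq_sym.
  - by apply/(iconnE T e).
  - have -> : X :&: ((y |: X) :\ z) = X :\ z.
      apply/setP=> v; rewrite !inE; case vX: (v \in X); rewrite ?orbT ?andbT //=.
      by rewrite andbF.
    by move: (cardsD1 z X); rewrite zX -cX add1n => ->.
apply/andP; split.
  apply/eqP=> E; have : y \in X by rewrite -E !inE eqxx orTb andbT eq_sym.
  by rewrite (negbTE yX).
apply/existsP; exists y; rewrite !inE eqxx eq_sym zy yX /=.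
apply/forallP=> w; apply/implyP; rewrite !inE.
case: (eqVneq w y) => [->|wy]; first by rewrite /vle leqnn.
case: (eqVneq w z) => [->|wz]; first by rewrite /vle ltnW.
by rewrite /=; case: (w \in X).
Qed.

Theorem lemma2 (T : finType) (e : rel T) (ord : seq T) (k : nat) (X : {set T}) :
  simple_graph e -> graph_connected e -> 0 < k ->
  is_dfs_order e ord ->
  conn_ksets e k X ->
  (exists Y : {set T}, conn_ksets e k Y && lex_lt ord Y X) ->
  exists X' : {set T}, in_nbhd e k X X' && lex_lt ord X' X.
Proof.
move=> [esym _] conn kpos dfs /andP[/eqP cX cXb] [Y /andP[/andP[/eqP cY _] lt]].
have [allin par] := @dfs_facts T e ord conn dfs.
have cXi : iconn T e X by apply/(iconnE T e).
have idx_inj : forall u v, index u ord = index v ord -> u = v.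
  by move=> u v E; rewrite -(nth_index u (allin u)) E nth_index.
move: lt => /andP[YneX /existsP[a /andP[aYX /forallP Ha]]].
have [b bX bY] : exists2 b, b \in X & b \notin Y.
  apply/subsetPn; apply: contra YneX => XY.
  by rewrite eq_sym eqEcard XY cX cY leqnn.
have aX : a \notin X by move: aYX; rewrite inE => /andP[].
have hab : index a ord <= index b ord.
  by have := Ha b; rewrite !inE bX bY orbT.
case: (@arg_minnP _ a (fun v => v \notin X) (fun v => index v ord) aX) => y0 y0X y0min.
have y0b : index y0 ord < index b ord.
  rewrite ltn_neqAle (leq_trans (y0min a aX) hab) andbT.
  by apply/negP=> /eqP /idx_inj E; move: y0X; rewrite E bX.
case: (posnP (index y0 ord)) => [y00|y0pos].
  case: (@arg_minnP _ b (fun v => v \in X) (fun v => index v ord) bX) => x0 x0X x0min.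
  have x0pos : 0 < index x0 ord.
    rewrite lt0n; apply/negP=> /eqP E; move: y0X.
    by rewrite (idx_inj y0 x0) ?E ?y00 ?x0X.
  have [y ey yi] := par x0 x0pos.
  have yX : y \notin X by apply/negP=> /x0min; rewrite leqNgt yi.
  have cW : iconn T e (y |: X) by apply: (@add_conn T e esym _ _ _ cXi x0X); rewrite esym.
  have c0 : iconn T e [set y].
    by move=> u v; rewrite !inE => /eqP-> /eqP->; apply: connect0.
  have sub0 : [set y] \subset y |: X by rewrite sub1set in_setU1 eqxx.
  have ne0 : [set y] != set0 by apply/set0Pn; exists y; rewrite inE.
  have x0in : x0 \in (y |: X) :\: [set y].
    by rewrite !inE x0X orbT andbT; apply: contraNneq yX => <-.
  have : 0 < #|(y |: X) :\: [set y]| by apply/card_gt0P; exists x0.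
  case E: #|_| => [//|n] _.
  have [z zin cz] := @grow T e esym _ _ cW _ c0 sub0 ne0 E.
  move: zin; rewrite !inE => /andP[zy /orP[/eqP zy'|zX]]; first by rewrite zy' eqxx in zy.
  apply: (@finish T e ord k X _ _ esym cX yX zX _ cz).
  by apply: (leq_trans yi); apply: x0min.
have [p ep pi] := par y0 y0pos.
have pX : p \in X by apply/negPn/negP=> /y0min; rewrite leqNgt pi.
have cW : iconn T e (y0 |: X) by apply: (@add_conn T e esym _ _ _ cXi pX).
pose T0 := [set v | index v ord <= index y0 ord].
have c0 : iconn T e T0.
  pose r := nth y0 ord 0.
  have toR : forall n v, index v ord = n -> v \in T0 -> connect (erel T e T0) r v.
    elim/ltn_ind=> n IH v vn vT.
    case: (posnP n) => [n0|npos].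
      by rewrite /r -n0 -vn nth_index.
    have [u euv ui] : exists2 u, e u v & index u ord < n.
      by rewrite -vn; apply: par; rewrite vn.
    have uT : u \in T0.
      by rewrite inE (leq_trans (ltnW ui)) // -vn; move: vT; rewrite inE.
    apply: connect_trans (IH _ ui u erefl uT) _.
    by apply: connect1; rewrite /erel /= euv vT uT.
  move=> u v uT vT; apply: connect_trans (_ : connect _ u r) (toR _ v erefl vT).
  by rewrite (sym_connect_sym (@erel_sym T e esym T0)); apply: toR erefl uT.
have sub0 : T0 \subset y0 |: X.
  apply/subsetP=> v; rewrite inE leq_eqVlt => /orP[/eqP/idx_inj->|vlt].
    by rewrite in_setU1 eqxx.
  by rewrite in_setU1; apply/orP; right; apply/negPn/negP=> /y0min; rewrite leqNgt vlt.
have ne0 : T0 != set0 by apply/set0Pn; exists y0; rewrite inE.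
have bin : b \in (y0 |: X) :\: T0 by rewrite !inE bX orbT andbT -ltnNge.
have : 0 < #|(y0 |: X) :\: T0| by apply/card_gt0P; exists b.
case E: #|_| => [//|n] _.
have [z zin cz] := @grow T e esym _ _ cW _ c0 sub0 ne0 E.
move: zin; rewrite !inE -ltnNge => /andP[zy /orP[/eqP zy'|zX]].
  by rewrite zy' ltnn in zy.
exact: (@finish T e ord k X _ _ esym cX y0X zX zy cz).
Qed.
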